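(* Suppose $f$ is $L_f$-smooth, $\mathbf{c}$ is $L_c$-smooth, and there exist $C,G>0$ such that for all $\mathbf{x}$: $\|\nabla f(\mathbf{x})\|\le G$, all subgradients of $h$ and $g$ have norm at most $G$, $\|\nabla\mathbf{c}(\mathbf{x})\|\le G$, $\|\mathbf{c}(\mathbf{x})\|\le C$. Suppose the parameters satisfy $\mu_kL_{\rho_k}\le\frac14$, $\mu_{k+1}\le\mu_k$, $\rho_k\le\rho_{k+1}$, $0<\beta\le1$ for all $k\ge0$. Then for any $k\ge0$, $\mathcal{L}_{\rho_{k+1},\mu_{k+1}}(\mathbf{w}^{k+1})\le\mathcal{L}_{\rho_k,\mu_k}(\mathbf{w}^k)-\frac{(2\mu_k)^{-1}-L_{\rho_k}}{2}\|\mathbf{w}^{k+1}-\mathbf{w}^k\|^2+\frac{\rho_{k+1}-\rho_k}{2}C^2+\Delta_{k+1}+\mu_k\|\mathbf{e}^k\|^2$, where $\Delta_{k+1}:=\frac{|\mu_k-\mu_{k+1}|}{2\mu_{k+1}^2}(C^2+\|\mathbf{x}^{k+1}-\mathbf{z}^{k+1}\|^2)$. Moreover, $\|\mathbf{w}^{k+1}-\mathbf{w}^k\|^2\le\frac{4\mu_k}{1-2\mu_kL_{\rho_k}}\bigl(\mathcal{L}_{\rho_k,\mu_k}(\mathbf{w}^k)-\mathcal{L}_{\rho_{k+1},\mu_{k+1}}(\mathbf{w}^{k+1})+\Delta_{k+1}+\frac{\rho_{k+1}-\rho_k}{2}C^2+\mu_k\|\mathbf{e}^k\|^2\bigr)$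.
   Context: Problem: $\min f(\mathbf{x})+h(\mathbf{x})-g(\mathbf{x})$ s.t. $\mathbf{c}(\mathbf{x})=\mathbf{0}$, $f=\mathbb{E}_\xi[\mathbf{f}(\cdot,\xi)]$, $h,g$ proper closed convex. $Q_\rho(\mathbf{x})=f(\mathbf{x})+\frac{\rho}{2}\|\mathbf{c}(\mathbf{x})\|^2$, which is $L_\rho$-smooth with $L_\rho=\rho(\rho_0^{-1}L_f+G^2+CL_c)$. Potential function $\mathcal{L}_{\rho,\mu}(\mathbf{w})=Q_\rho(\mathbf{x})+h(\mathbf{x})+\frac{1}{2\mu}\|\mathbf{x}-\mathbf{z}\|^2-\mathcal{M}_{\mu g}(\mathbf{z})$ for $\mathbf{w}=(\mathbf{x},\mathbf{z})$, where $\mathcal{M}_{\mu g}(\mathbf{z})=\min_{\mathbf{x}}\{g(\mathbf{x})+\frac{1}{2\mu}\|\mathbf{x}-\mathbf{z}\|^2\}$. Iterates $\mathbf{w}^k=(\mathbf{x}^k,\mathbf{z}^k)$ are generated by MoSSP-P or MoSSP-R: $\mathbf{x}^{k+1}=\mathrm{prox}_{\mu_kh}(\mathbf{z}^k-\mu_k\mathbf{G}^k)$, $\mathbf{z}^{k+1}=\mathbf{z}^k-\beta(\mathrm{prox}_{\mu_kg}(\mathbf{z}^k)-\mathbf{x}^{k+1})$, where $\mathbf{G}^k$ is the stochastic estimator $\mathbf{S}^k$ (Polyak momentum: $\mathbf{S}^k=\mathbf{s}^k+\rho_k\nabla\mathbf{c}(\mathbf{x}^k)\mathbf{c}(\mathbf{x}^k)$,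 $\mathbf{s}^k=(1-\alpha_{k-1})\mathbf{s}^{k-1}+\alpha_{k-1}\nabla\mathbf{f}(\mathbf{x}^k,\xi^k)$) or $\mathbf{D}^k$ (recursive momentum: $\mathbf{D}^k=\mathbf{d}^k+\rho_k\nabla\mathbf{c}(\mathbf{x}^k)\mathbf{c}(\mathbf{x}^k)$, $\mathbf{d}^k=\nabla\mathbf{f}(\mathbf{x}^k,\xi^k)+(1-\alpha_{k-1})(\mathbf{d}^{k-1}-\nabla\mathbf{f}(\mathbf{x}^{k-1},\xi^k))$), and $\mathbf{e}^k:=\mathbf{G}^k-\nabla Q_{\rho_k}(\mathbf{x}^k)$. *)

(* Defs.v *)
From HB Require Import structures.
From mathcomp Require Import all_boot all_order all_algebra.
From mathcomp Require Import all_classical all_reals all_analysis.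
Set Implicit Arguments. Unset Strict Implicit. Unset Printing Implicit Defensive.
Import Order.TTheory GRing.Theory Num.Theory.
Import numFieldNormedType.Exports.
Local Open Scope classical_set_scope.
Local Open Scope ring_scope.

Section Defs.
Variable R : realType.

Definition dot (n : nat) (u v : 'cV[R]_n) : R := (u^T *m v) 0 0.
Definition enorm (n : nat) (v : 'cV[R]_n) : R := Num.sqrt (dot v v).

Definition gradient_of (n : nat) (f : 'cV[R]_n -> R) (gf : 'cV[R]_n -> 'cV[R]_n) :=
  forall x, differentiable f x /\ forall v, 'd f x v = dot (gf x) v.

(* Jc x (an n x m matrix) is the gradient nabla c(x) of c : R^n -> R^m,
   i.e. the transpose of the Jacobian: the differential is v |-> (Jc x)^T v *)
Definition gradmap_of (n m : nat) (c : 'cV[R]_n -> 'cV[R]_m)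
    (Jc : 'cV[R]_n -> 'M[R]_(n, m)) :=
  forall x, differentiable c x /\ forall v, 'd c x v = (Jc x)^T *m v.

Definition smooth_fun (n : nat) (L : R) (f : 'cV[R]_n -> R) (gf : 'cV[R]_n -> 'cV[R]_n) :=
  [/\ 0 <= L, gradient_of f gf &
      forall x y, enorm (gf x - gf y) <= L * enorm (x - y)].

Definition smooth_map (n m : nat) (L : R) (c : 'cV[R]_n -> 'cV[R]_m)
    (Jc : 'cV[R]_n -> 'M[R]_(n, m)) :=
  [/\ 0 <= L, gradmap_of c Jc &
      forall x y (u : 'cV[R]_m), enorm ((Jc x - Jc y) *m u) <= L * enorm (x - y) * enorm u].

Definition convex_fun (n : nat) (h : 'cV[R]_n -> R) :=
  forall x y (t : R), 0 <= t <= 1 ->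
    h (t *: x + (1 - t) *: y) <= t * h x + (1 - t) * h y.

Definition subgrad (n : nat) (h : 'cV[R]_n -> R) (x v : 'cV[R]_n) :=
  forall y, h x + dot v (y - x) <= h y.

Definition is_prox (n : nat) (mu : R) (h : 'cV[R]_n -> R) (v p : 'cV[R]_n) :=
  forall y, h p + enorm (p - v) ^+ 2 / (2 * mu) <= h y + enorm (y - v) ^+ 2 / (2 * mu).

Definition moreau (n : nat) (mu : R) (g : 'cV[R]_n -> R) (z : 'cV[R]_n) : R :=
  inf [set g x + enorm (x - z) ^+ 2 / (2 * mu) | x in [set: 'cV[R]_n]].

Definition Qpen (n m : nat) (f : 'cV[R]_n -> R) (c : 'cV[R]_n -> 'cV[R]_m) (rho : R)
    (x : 'cV[R]_n) : R := f x + rho / 2 * enorm (c x) ^+ 2.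

Definition potential (n m : nat) (f : 'cV[R]_n -> R) (c : 'cV[R]_n -> 'cV[R]_m)
    (h g : 'cV[R]_n -> R) (rho mu : R) (x z : 'cV[R]_n) : R :=
  Qpen f c rho x + h x + enorm (x - z) ^+ 2 / (2 * mu) - moreau mu g z.

Definition Lrho (rho0 Lf Lc G C rho : R) : R := rho * (rho0^-1 * Lf + G ^+ 2 + C * Lc).

Definition wnorm2 (n : nat) (x z : 'cV[R]_n) : R := enorm x ^+ 2 + enorm z ^+ 2.

End Defs.

(* Main.v *)
Require Import Defs.
From HB Require Import structures.
From mathcomp Require Import all_boot all_order all_algebra.
From mathcomp Require Import all_classical all_reals all_analysis.
From mathcomp Require Import ring lra.
Import Order.TTheory GRing.Theory Num.Theory.
Import numFieldNormedType.Exports.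
Local Open Scope ring_scope.
Local Open Scope classical_set_scope.
Section DotLemmas.
Context {R : realType} {n : nat}.
Implicit Types u v w : 'cV[R]_n.

Lemma dotE u v : dot u v = \sum_i u i 0 * v i 0.
Proof. by rewrite /dot mxE; apply: eq_bigr => i _; rewrite mxE. Qed.

Lemma dotC u v : dot u v = dot v u.
Proof. by rewrite !dotE; apply: eq_bigr => i _; rewrite mulrC. Qed.

Lemma dotDl u v w : dot (u + v) w = dot u w + dot v w.
Proof. by rewrite !dotE -big_split; apply: eq_bigr => i _; rewrite mxE mulrDl. Qed.

Lemma dotDr u v w : dot w (u + v) = dot w u + dot w v.
Proof. by rewrite dotC dotDl !(dotC w). Qed.

Lemma dotZl (a : R) u v : dot (a *: u) v = a * dot u v.
Proof. by rewrite !dotE mulr_sumr; apply: eq_bigr => i _; rewrite mxE mulrA. Qed.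

Lemma dotZr (a : R) u v : dot u (a *: v) = a * dot u v.
Proof. by rewrite dotC dotZl dotC. Qed.

Lemma dotNl u v : dot (- u) v = - dot u v.
Proof. by rewrite -scaleN1r dotZl mulN1r. Qed.

Lemma dotNr u v : dot u (- v) = - dot u v.
Proof. by rewrite dotC dotNl dotC. Qed.

Lemma dotBl u v w : dot (u - v) w = dot u w - dot v w.
Proof. by rewrite dotDl dotNl. Qed.

Lemma dotBr u v w : dot w (u - v) = dot w u - dot w v.
Proof. by rewrite dotDr dotNr. Qed.

Lemma dot_sq_add u v : dot (u + v) (u + v) = dot u u + 2 * dot u v + dot v v.
Proof. by rewrite dotDl !dotDr (dotC v u); ring. Qed.

Lemma dot_ge0 u : 0 <= dot u u.
Proof. by rewrite dotE; apply: sumr_ge0 => i _; by rewrite -expr2 sqr_ge0. Qed.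

Lemma enorm2 u : enorm u ^+ 2 = dot u u.
Proof. by rewrite /enorm sqr_sqrtr // dot_ge0. Qed.

Lemma enorm_ge0 u : 0 <= enorm u.
Proof. exact: sqrtr_ge0. Qed.

Lemma dot0_eq u : dot u u = 0 -> forall v, dot u v = 0.
Proof.
rewrite dotE => /eqP; rewrite psumr_eq0; last by by move=> i _; rewrite -expr2 sqr_ge0.
move=> /allP H v; rewrite dotE big1 // => i _.
have /H : i \in index_enum 'I_n by rewrite mem_index_enum.
by rewrite /= mulf_eq0 orbb => /eqP ->; rewrite mul0r.
Qed.

Lemma CS2 u v : dot u v ^+ 2 <= dot u u * dot v v.
Proof.
set A := dot u u; set B := dot u v; set C := dot v v.
have [A0|Apos] := eqVneq A 0.
  by rewrite /B (@dot0_eq u A0 v) A0 expr0n mul0r.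
have Agt0 : 0 < A by rewrite lt_def Apos dot_ge0.
have H := dot_ge0 (A *: v - B *: u).
rewrite !(dotBl, dotBr, dotZl, dotZr) -/A -/C (dotC v u) -/B in H.
have : 0 <= A * (A * C - B ^+ 2) by lra.
by rewrite pmulr_rge0 // subr_ge0 mulrC.
Qed.

Lemma CS u v : dot u v <= enorm u * enorm v.
Proof.
case: (lerP (dot u v) 0) => [H|H].
  by apply: le_trans H _; rewrite mulr_ge0 // enorm_ge0.
rewrite /enorm -sqrtrM ?dot_ge0 //.
rewrite -(ger0_norm (ltW H)) -sqrtr_sqr ler_sqrt ?mulr_ge0 ?dot_ge0 //.
exact: CS2.
Qed.

Lemma enormZ (a : R) u : enorm (a *: u) = `|a| * enorm u.
Proof.
by rewrite /enorm dotZl dotZr mulrA -expr2 sqrtrM ?sqr_ge0 // sqrtr_sqr.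
Qed.

Lemma enormN u : enorm (- u) = enorm u.
Proof. by rewrite /enorm dotNl dotNr opprK. Qed.

Lemma young (mu : R) u v : 0 < mu -> dot u v <= mu * dot u u + dot v v / (4 * mu).
Proof.
move=> mu0.
have H := dot_ge0 ((2 * mu) *: u - v).
rewrite !(dotBl, dotBr, dotZl, dotZr) (dotC v u) in H.
rewrite -subr_ge0.
have -> : mu * dot u u + dot v v / (4 * mu) - dot u v =
  (4 * mu)^-1 * (2 * mu * (2 * mu * dot u u - dot u v) - (2 * mu * dot u v - dot v v)).
  by field; rewrite gt_eqF.
by rewrite mulr_ge0 // invr_ge0 mulr_ge0 // ltW.
Qed.

End DotLemmas.

Lemma dot_mx (R : realType) n m (A : 'M[R]_(n, m)) (u : 'cV[R]_m) (v : 'cV[R]_n) :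
  dot (A *m u) v = dot u (A^T *m v).
Proof. by rewrite /dot trmx_mul mulmxA. Qed.
Lemma polyder (R : realType) (a b t : R) :
  is_derive t 1 ((fun s : R => a * s) + (fun s => b / 2 * (s * s))) (a + b * t).
Proof.
apply: is_derive_eq.
rewrite -[a%:A]/(a * 1) -[t%:A]/(t * 1) -[(b / 2) *: _]/(b / 2 * _).
lra.
Qed.

Lemma descent_gen (R : realType) n (F : 'cV[R]_n -> R) (x d : 'cV[R]_n) (a b : R) :
  (forall t : R, derivable F (x + t *: d) d) ->
  (forall t : R, 0 <= t <= 1 -> 'D_d F (x + t *: d) <= a + b * t) ->
  F (x + d) <= F x + a + b / 2.
Proof.
move=> dF hD.
pose phi := fun t : R => F (x + t *: d).
have qE t : (fun h : R => h^-1 *: ((phi \o shift t) (h *: 1) - phi t)) =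
   (fun h : R => h^-1 *: ((F \o shift (x + t *: d)) (h *: d) - F (x + t *: d))).
  apply/funext => h; rewrite /phi /= /shift; congr (_ *: (F _ - _)).
  change (h *: (1:R)) with (h * 1).
  by apply/matrixP => i j; rewrite !mxE; ring.
have dphi t : derivable phi t 1 by rewrite /derivable qE; exact: dF.
have Dphi t : 'D_1 phi t = 'D_d F (x + t *: d) by rewrite /derive qE.
pose p := (fun s : R => a * s) + (fun s => b / 2 * (s * s)).
pose psi := phi - p.
have dpsi (t : R) : is_derive t (1:R) psi ('D_d F (x + t *: d) - (a + b * t)).
  rewrite -Dphi; apply: is_deriveB; [exact: derivableP | exact: polyder].
have cpsi : {within `[0, 1], continuous psi}.
  apply: derivable_within_continuous => t _.
  by case: (dpsi t).
have [c cI] := @MVT_segment R psi _ 0 1 ler01 (fun t _ => dpsi t) cpsi.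
rewrite subr0 mulr1 => E.
have : psi 1 - psi 0 <= 0.
  rewrite E subr_le0; apply: hD.
  by move: cI; rewrite in_itv.
have -> : psi 1 = F (x + 1 *: d) - (a * 1 + b / 2 * (1 * 1)) by [].
have -> : psi 0 = F (x + 0 *: d) - (a * 0 + b / 2 * (0 * 0)) by [].
rewrite scale1r scale0r addr0.
lra.
Qed.

Lemma dcoord (R : realType) n m (c : 'cV[R]_n -> 'cV[R]_m) (y d : 'cV[R]_n) (i : 'I_m) :
  differentiable c y ->
  derivable (fun z => c z i 0) y d /\ 'D_d (fun z => c z i 0) y = ('d c y d) i 0.
Proof.
move=> dc.
have @cf : {linear 'cV[R]_m -> R}.
  by exists (fun N : 'cV[R]_m => N i 0); do 2![eexists]; do ?[constructor];
     rewrite ?mxE// => ? *; rewrite ?mxE//; move=> ?; rewrite !mxE.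
have cfc : continuous cf by exact: coord_continuous.
have -> : (fun z => c z i 0) = cf \o c by [].
have dcomp : differentiable (cf \o c) y.
  by apply: differentiable_comp => //; exact: linear_differentiable.
split; first exact: diff_derivable.
rewrite deriveE // diff_comp //; last exact: linear_differentiable.
by rewrite diff_lin.
Qed.

Lemma dot_c_der (R : realType) n m (c : 'cV[R]_n -> 'cV[R]_m) Jc (u : 'cV[R]_m) (y d : 'cV[R]_n) :
  gradmap_of c Jc ->
  derivable (fun z => dot u (c z)) y d /\ 'D_d (fun z => dot u (c z)) y = dot (Jc y *m u) d.
Proof.
move=> gc; have [dc dcE] := gc y.
have E : (fun z => dot u (c z)) = \sum_(i < m) ((u i 0) *: (fun z => c z i 0)).
  by apply/funext => z; rewrite fct_sumE dotE; apply: eq_bigr.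
rewrite E.
have der i : derivable ((u i 0) *: (fun z => c z i 0)) y d.
  by apply: derivableZ; case: (@dcoord _ _ _ c y d i dc).
split; first exact: derivable_sum.
rewrite derive_sum // dot_mx -dcE dotE; apply: eq_bigr => i _.
rewrite deriveZ; last by case: (@dcoord _ _ _ c y d i dc).
by case: (@dcoord _ _ _ c y d i dc) => _ ->.
Qed.

Lemma enormZpos (R : realType) n (t : R) (d : 'cV[R]_n) : 0 <= t -> enorm (t *: d) = t * enorm d.
Proof. by move=> t0; rewrite enormZ ger0_norm. Qed.

Lemma f_desc (R : realType) n (f : 'cV[R]_n -> R) gradf Lf (x d : 'cV[R]_n) :
  smooth_fun Lf f gradf ->
  f (x + d) <= f x + dot (gradf x) d + Lf / 2 * dot d d.
Proof.
case=> Lf0 gf Lip.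
have -> : Lf / 2 * dot d d = (Lf * dot d d) / 2 by rewrite mulrAC.
rewrite -addrA addrA.
apply: descent_gen => [t|t /andP[t0 t1]].
  by apply: diff_derivable; case: (gf (x + t *: d)).
have [dfy dE] := gf (x + t *: d).
rewrite deriveE // dE -[dot (gradf (x + t *: d)) d](subrK (dot (gradf x) d)) -dotBl.
rewrite addrC lerD2l.
apply: le_trans (CS _ _) _.
apply: le_trans (ler_wpM2r (enorm_ge0 _) (Lip _ _)) _.
rewrite addrC addKr enormZpos // -enorm2 expr2.
have := enorm_ge0 d; nra.
Qed.

Lemma cu_desc (R : realType) n m (c : 'cV[R]_n -> 'cV[R]_m) Jc Lc (u : 'cV[R]_m) (x d : 'cV[R]_n) :
  smooth_map Lc c Jc ->
  dot u (c (x + d)) <= dot u (c x) + dot (Jc x *m u) d + Lc * enorm u / 2 * dot d d.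
Proof.
case=> Lc0 gc Lip.
have -> : Lc * enorm u / 2 * dot d d = (Lc * enorm u * dot d d) / 2 by rewrite mulrAC.
rewrite -addrA addrA.
apply: (@descent_gen _ _ (fun z => dot u (c z))) => [t|t /andP[t0 t1]].
  by case: (@dot_c_der _ _ _ c Jc u (x + t *: d) d gc).
case: (@dot_c_der _ _ _ c Jc u (x + t *: d) d gc) => _ ->.
rewrite -[dot (Jc (x + t *: d) *m u) d](subrK (dot (Jc x *m u) d)) -dotBl -mulmxBl.
rewrite addrC lerD2l.
apply: le_trans (CS _ _) _.
apply: le_trans (ler_wpM2r (enorm_ge0 _) (Lip _ _ _)) _.
rewrite addrC addKr enormZpos // -enorm2 expr2.
have := enorm_ge0 d; have := enorm_ge0 u; nra.
Qed.

Lemma c_lip (R : realType) n m (c : 'cV[R]_n -> 'cV[R]_m) Jc Lc G (x d : 'cV[R]_n) :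
  smooth_map Lc c Jc -> 0 <= G ->
  (forall y (u : 'cV[R]_m), enorm (Jc y *m u) <= G * enorm u) ->
  dot (c (x + d) - c x) (c (x + d) - c x) <= G ^+ 2 * dot d d.
Proof.
case=> Lc0 gc Lip G0 JG.
set w := c (x + d) - c x.
have H : dot w (c (x + d)) <= dot w (c x) + G * enorm w * enorm d + 0 / 2.
  apply: (@descent_gen _ _ (fun z => dot w (c z))) => [t|t /andP[t0 t1]].
    by case: (@dot_c_der _ _ _ c Jc w (x + t *: d) d gc).
  case: (@dot_c_der _ _ _ c Jc w (x + t *: d) d gc) => _ ->.
  rewrite mul0r addr0.
  apply: le_trans (CS _ _) _.
  by apply: ler_wpM2r; [exact: enorm_ge0 | exact: JG].
have H2 : enorm w ^+ 2 <= G * enorm w * enorm d.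
  by rewrite enorm2 {2}/w dotBr; rewrite mul0r addr0 in H; lra.
have nw := enorm_ge0 w; have nd := enorm_ge0 d.
have Gd := mulr_ge0 G0 nd.
have H3 : enorm w <= G * enorm d.
  case: (lerP (enorm w) (G * enorm d)) => // H'.
  have wp : 0 < enorm w by apply: le_lt_trans H'.
  have : enorm w * (G * enorm d) < enorm w * enorm w by rewrite ltr_pM2l.
  rewrite -expr2; lra.
rewrite -enorm2 -[dot d d]enorm2.
have : enorm w * enorm w <= (G * enorm d) * (G * enorm d) by apply: ler_pM.
rewrite -!expr2 exprMn; lra.
Qed.

Lemma Q_descent (R : realType) n m (f : 'cV[R]_n -> R) gradf (c : 'cV[R]_n -> 'cV[R]_m) Jc
    Lf Lc G C rho L (x d : 'cV[R]_n) :
  smooth_fun Lf f gradf -> smooth_map Lc c Jc -> 0 <= G ->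
  (forall y (u : 'cV[R]_m), enorm (Jc y *m u) <= G * enorm u) ->
  (forall y, enorm (c y) <= C) -> 0 <= rho ->
  Lf + rho * (G ^+ 2 + C * Lc) <= L ->
  Qpen f c rho (x + d) <= Qpen f c rho x + dot (gradf x + rho *: (Jc x *m c x)) d
     + L / 2 * enorm d ^+ 2.
Proof.
move=> sf sc G0 JG cC rho0 HL.
have Hf := @f_desc _ _ f gradf Lf x d sf.
have Hu := @cu_desc _ _ _ c Jc Lc (c x) x d sc.
have Hw := @c_lip _ _ _ c Jc Lc G x d sc G0 JG.
have Lc0 : 0 <= Lc by case: sc.
have Lf0 : 0 <= Lf by case: sf.
have cx := cC x; have cx0 := enorm_ge0 (c x).
rewrite /Qpen !enorm2 dotDl dotZl dot_mx.
rewrite dot_mx in Hu.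
have E : dot (c (x + d)) (c (x + d)) = dot (c x) (c x) + 2 * (dot (c x) (c (x + d)) - dot (c x) (c x))
   + dot (c (x + d) - c x) (c (x + d) - c x).
  by rewrite !(dotBl, dotBr) (dotC (c (x + d)) (c x)); ring.
rewrite E.
have dd := dot_ge0 d.
have K1 : Lc * enorm (c x) * dot d d <= Lc * C * dot d d.
  by apply: ler_wpM2r => //; apply: ler_wpM2l.
have K2 : Lf / 2 * dot d d + rho / 2 * (Lc * C * dot d d + G ^+ 2 * dot d d) <= L / 2 * dot d d.
  have : (Lf + rho * (G ^+ 2 + C * Lc)) * dot d d <= L * dot d d by apply: ler_wpM2r.
  lra.
have K3 : rho / 2 * (Lc * enorm (c x) * dot d d) <= rho / 2 * (Lc * C * dot d d).
  by apply: ler_wpM2l => //; lra.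
have K4 : rho / 2 * (2 * (dot (c x) (c (x + d)) - dot (c x) (c x))) <=
          rho / 2 * (2 * (dot (c x) ((Jc x)^T *m d) + Lc * enorm (c x) / 2 * dot d d)).
  by apply: ler_wpM2l; lra.
have K5 : rho / 2 * dot (c (x + d) - c x) (c (x + d) - c x) <= rho / 2 * (G ^+ 2 * dot d d).
  by apply: ler_wpM2l => //; lra.
lra.
Qed.

Lemma lim0 (R : realType) (A B : R) : (forall t, 0 < t <= 1 -> 0 <= A + t * B) -> 0 <= A.
Proof.
move=> H; case: (lerP 0 A) => // An.
case: (lerP 0 B) => Bs; last first.
  by have := H 1; rewrite ltr01 lexx mul1r => /(_ isT); lra.
have BA : 0 < B - A by lra.
pose t := - A / (B - A).
have tE : t * (B - A) = - A by rewrite /t divfK // gt_eqF.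
have t0 : 0 < t by rewrite /t divr_gt0 // oppr_gt0.
have t1 : t <= 1 by rewrite /t ler_pdivrMr // mul1r; lra.
have := H t; rewrite t0 t1 => /(_ isT) Ht.
have : 0 <= (A + t * B) * (B - A) by rewrite mulr_ge0 // ltW.
nra.
Qed.

Lemma prox_strong (R : realType) n (mu : R) (h : 'cV[R]_n -> R) (v p : 'cV[R]_n) :
  0 < mu -> convex_fun h -> is_prox mu h v p ->
  forall y, h p + enorm (p - v) ^+ 2 / (2 * mu) + enorm (y - p) ^+ 2 / (2 * mu)
            <= h y + enorm (y - v) ^+ 2 / (2 * mu).
Proof.
move=> mu0 hc hp y.
set k := (2 * mu)^-1.
have k0 : 0 <= k by rewrite /k invr_ge0 mulr_ge0 // ltW.
set D := dot (p - v) (y - p).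
have Ey : enorm (y - v) ^+ 2 = enorm (p - v) ^+ 2 + 2 * D + enorm (y - p) ^+ 2.
  have -> : y - v = (p - v) + (y - p) by apply/matrixP => i j; rewrite !mxE; ring.
  by rewrite !enorm2 dot_sq_add -/D.
suff : 0 <= h y - h p + 2 * D * k.
  rewrite Ey; rewrite -/k; nra.
apply: (@lim0 _ _ (enorm (y - p) ^+ 2 * k)) => t /andP[t0 t1].
have yt := hp (t *: y + (1 - t) *: p).
have cv := hc y p t; rewrite ltW //= in cv; have {}cv := cv t1.
have Et : enorm (t *: y + (1 - t) *: p - v) ^+ 2 =
    enorm (p - v) ^+ 2 + 2 * t * D + t ^+ 2 * enorm (y - p) ^+ 2.
  have -> : t *: y + (1 - t) *: p - v = (p - v) + t *: (y - p)
    by apply/matrixP => i j; rewrite !mxE; ring.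
  by rewrite !enorm2 dot_sq_add !(dotZl, dotZr) -/D; ring.
rewrite Et -/k in yt.
have : 0 <= t * (h y - h p + 2 * D * k + t * (enorm (y - p) ^+ 2 * k)).
  have E2 : t * (h y - h p + 2 * D * k + t * (enorm (y - p) ^+ 2 * k)) =
    (t * h y + (1 - t) * h p) + (enorm (p - v) ^+ 2 + 2 * t * D + t ^+ 2 * enorm (y - p) ^+ 2) * k
    - (h p + enorm (p - v) ^+ 2 * k) by ring.
  rewrite E2; lra.
by rewrite pmulr_rge0.
Qed.

Lemma moreau_prox (R : realType) n (mu : R) (g : 'cV[R]_n -> R) (z p : 'cV[R]_n) :
  is_prox mu g z p -> moreau mu g z = g p + enorm (p - z) ^+ 2 / (2 * mu).
Proof.
move=> hp; rewrite /moreau.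
set S := [set _ | _ in _].
have Sp : S (g p + enorm (p - z) ^+ 2 / (2 * mu)) by exists p.
have lb : lbound S (g p + enorm (p - z) ^+ 2 / (2 * mu)).
  by move=> _ [y _ <-]; exact: hp.
apply/le_anti/andP; split.
  by apply: ge_inf => //; exists (g p + enorm (p - z) ^+ 2 / (2 * mu)).
by apply: lb_le_inf => //; exists (g p + enorm (p - z) ^+ 2 / (2 * mu)).
Qed.

Lemma gram_id (R : realType) n (r a b : 'cV[R]_n) (be : R) :
  dot (r - a - be *: r) (r - a - be *: r) - dot (r - a) (r - a) - dot b b
  + dot (b - a) (b - a) - dot (b - a - be *: r) (b - a - be *: r) + dot (be *: r) (be *: r)
  = - dot (b - be *: r) (b - be *: r) + 2 * be * (be - 1) * dot r r.
Proof.
rewrite !(dotDl, dotDr, dotNl, dotNr, dotZl, dotZr) (dotC a r) (dotC b r) (dotC b a).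
ring.
Qed.

Theorem lemmaC2 (R : realType) (n m : nat) (Xi : Type)
  (f : 'cV[R]_n -> R) (gradf : 'cV[R]_n -> 'cV[R]_n)
  (sgrad : 'cV[R]_n -> Xi -> 'cV[R]_n)
  (c : 'cV[R]_n -> 'cV[R]_m) (Jc : 'cV[R]_n -> 'M[R]_(n, m))
  (h g : 'cV[R]_n -> R) (Lf Lc C G beta : R)
  (mu rho alpha : nat -> R) (xi : nat -> Xi)
  (x z Gk s : nat -> 'cV[R]_n) :
  smooth_fun Lf f gradf ->
  smooth_map Lc c Jc ->
  convex_fun h -> convex_fun g ->
  0 < C -> 0 < G ->
  (forall y, enorm (gradf y) <= G) ->
  (forall y v, subgrad h y v -> enorm v <= G) ->
  (forall y v, subgrad g y v -> enorm v <= G) ->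
  (forall y (u : 'cV[R]_m), enorm (Jc y *m u) <= G * enorm u) ->
  (forall y, enorm (c y) <= C) ->
  0 < rho 0%N ->
  (forall k, 0 < mu k) ->
  (forall k, mu k * Lrho (rho 0%N) Lf Lc G C (rho k) <= 1 / 4) ->
  (forall k, mu k.+1 <= mu k) ->
  (forall k, rho k <= rho k.+1) ->
  0 < beta <= 1 ->
  (* stochastic estimator: MoSSP-P (Polyak momentum) or MoSSP-R (recursive momentum) *)
  ((forall k, (0 < k)%N ->
      s k = (1 - alpha k.-1) *: s k.-1 + alpha k.-1 *: sgrad (x k) (xi k))
   \/
   (forall k, (0 < k)%N ->
      s k = sgrad (x k) (xi k) + (1 - alpha k.-1) *: (s k.-1 - sgrad (x k.-1) (xi k)))) ->
  (forall k, Gk k = s k + rho k *: (Jc (x k) *m c (x k))) ->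
  (* iterates *)
  (forall k, is_prox (mu k) h (z k - mu k *: Gk k) (x k.+1)) ->
  (forall k, exists p, is_prox (mu k) g (z k) p /\ z k.+1 = z k - beta *: (p - x k.+1)) ->
  forall k : nat,
  let Lk := Lrho (rho 0%N) Lf Lc G C (rho k) in
  let ek := Gk k - (gradf (x k) + rho k *: (Jc (x k) *m c (x k))) in
  let Delta := `|mu k - mu k.+1| / (2 * mu k.+1 ^+ 2)
                 * (C ^+ 2 + enorm (x k.+1 - z k.+1) ^+ 2) in
  let Pk := potential f c h g (rho k) (mu k) (x k) (z k) in
  let Pk1 := potential f c h g (rho k.+1) (mu k.+1) (x k.+1) (z k.+1) in
  let dw2 := wnorm2 (x k.+1 - x k) (z k.+1 - z k) in
  Pk1 <= Pk - ((2 * mu k)^-1 - Lk) / 2 * dw2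
          + (rho k.+1 - rho k) / 2 * C ^+ 2 + Delta + mu k * enorm ek ^+ 2
  /\
  dw2 <= 4 * mu k / (1 - 2 * mu k * Lk)
          * (Pk - Pk1 + Delta + (rho k.+1 - rho k) / 2 * C ^+ 2 + mu k * enorm ek ^+ 2).
Proof.
move=> sf sc hc gc C0 Gpos _ _ _ JG cC rho00 mu0 muL mudec rhoinc /andP[b0 b1] _ GkE hprox gprox k.
move=> Lk ek Delta Pk Pk1 dw2.
have rhok : forall j, rho 0%N <= rho j.
  by elim=> [|j IH]; [exact: lexx | exact: le_trans IH (rhoinc j)].
have rk0 : 0 < rho k by apply: lt_le_trans (rhok k).
have Lf0 : 0 <= Lf by case: sf.
have Lc0 : 0 <= Lc by case: sc.
have HL : Lf + rho k * (G ^+ 2 + C * Lc) <= Lk.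
  rewrite /Lk /Lrho.
  have q1 : 1 <= rho k / rho 0%N by rewrite ler_pdivlMr // mul1r.
  have : 1 * Lf <= rho k / rho 0%N * Lf by apply: ler_wpM2r.
  rewrite mul1r -mulrA; lra.
have L0 : 0 <= Lk.
  apply: le_trans HL; apply: addr_ge0 => //; apply: mulr_ge0; first exact: ltW.
  by apply: addr_ge0; [exact: sqr_ge0 | apply: mulr_ge0 => //; exact: ltW].
set mu0k := mu k; set mu1 := mu k.+1.
have m0 : 0 < mu0k := mu0 k.
have m1 : 0 < mu1 := mu0 k.+1.
have m10 : mu1 <= mu0k := mudec k.
set x0 := x k; set x1 := x k.+1; set z0 := z k; set z1 := z k.+1; set G0 := Gk k.
set N := gradf x0 + rho k *: (Jc x0 *m c x0).
have ekE : ek = G0 - N by [].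
set dx := x1 - x0; set dz := z1 - z0.
set DX := enorm dx ^+ 2; set DZ := enorm dz ^+ 2.
have DX0 : 0 <= DX by rewrite /DX sqr_ge0.
have DZ0 : 0 <= DZ by rewrite /DZ sqr_ge0.
have HA : h x1 + enorm (x1 - z0) ^+ 2 / (2 * mu0k) + dot G0 dx + DX / (2 * mu0k)
          <= h x0 + enorm (x0 - z0) ^+ 2 / (2 * mu0k).
  have H1 := @prox_strong _ _ _ _ _ _ m0 hc (hprox k) x0.
  rewrite -/x1 -/z0 -/G0 -/mu0k in H1.
  have e1 : x1 - (z0 - mu0k *: G0) = (x1 - z0) + mu0k *: G0
    by apply/matrixP => i j; rewrite !mxE; ring.
  have e2 : x0 - (z0 - mu0k *: G0) = (x0 - z0) + mu0k *: G0
    by apply/matrixP => i j; rewrite !mxE; ring.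
  have e3 : x0 - x1 = - dx by rewrite /dx opprB.
  have e4 : x1 - z0 = dx + (x0 - z0) by rewrite /dx addrA subrK.
  rewrite e1 e2 e3 enormN !enorm2 (dot_sq_add (x1 - z0)) (dot_sq_add (x0 - z0)) !(dotZl, dotZr) in H1.
  have e5 : dot (x1 - z0) G0 = dot G0 dx + dot (x0 - z0) G0 by rewrite e4 dotDl dotC.
  rewrite /DX !enorm2.
  have F1 : forall X Y : R, (X + 2 * (mu0k * Y) + mu0k * (mu0k * dot G0 G0)) / (2 * mu0k)
     = X / (2 * mu0k) + Y + mu0k * (mu0k * dot G0 G0) / (2 * mu0k).
    by move=> X Y; field; rewrite gt_eqF.
  rewrite !F1 in H1.
  lra.
have HB : Qpen f c (rho k) x1 <= Qpen f c (rho k) x0 + dot N dx + Lk / 2 * DX.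
  have := @Q_descent _ _ _ f gradf c Jc Lf Lc G C (rho k) Lk x0 dx sf sc (ltW Gpos) JG cC (ltW rk0) HL.
  by rewrite /dx addrC subrK.
have HC : dot N dx - dot G0 dx <= mu0k * enorm ek ^+ 2 + DX / (2 * mu0k) / 2.
  rewrite -dotBl.
  have Y := @young _ _ mu0k (N - G0) dx m0.
  have E : N - G0 = - ek by rewrite ekE opprB.
  rewrite E !dotNl dotNr opprK in Y; rewrite E dotNl /DX !enorm2.
  have F : dot dx dx / (4 * mu0k) = dot dx dx / (2 * mu0k) / 2 by field; rewrite gt_eqF.
  rewrite F in Y; lra.
have [p [pp zE]] := gprox k.
rewrite -/z0 -/z1 -/x1 -/mu0k in pp zE.
have [p1 [pp1 _]] := gprox k.+1.
rewrite -/z1 -/mu1 in pp1.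
have H3 := @prox_strong _ _ mu0k g z0 p m0 gc pp p1.
have M0 := @moreau_prox _ _ _ _ _ _ pp.
have M1 := @moreau_prox _ _ _ _ _ _ pp1.
have Gr : enorm (x1 - z1) ^+ 2 - enorm (x1 - z0) ^+ 2 - enorm (p1 - p) ^+ 2
          + enorm (p1 - z0) ^+ 2 - enorm (p1 - z1) ^+ 2 + DZ <= 0.
  have v1 : x1 - z1 = (x1 - p) - (z0 - p) - beta *: (x1 - p)
    by rewrite zE; apply/matrixP => i j; rewrite !mxE; ring.
  have v2 : x1 - z0 = (x1 - p) - (z0 - p)
    by apply/matrixP => i j; rewrite !mxE; ring.
  have v3 : p1 - z0 = (p1 - p) - (z0 - p)
    by apply/matrixP => i j; rewrite !mxE; ring.
  have v4 : p1 - z1 = (p1 - p) - (z0 - p) - beta *: (x1 - p)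
    by rewrite zE; apply/matrixP => i j; rewrite !mxE; ring.
  have v5 : dz = beta *: (x1 - p)
    by rewrite /dz zE; apply/matrixP => i j; rewrite !mxE; ring.
  rewrite /DZ v1 v2 v3 v4 v5 !enorm2 gram_id.
  have := dot_ge0 ((p1 - p) - beta *: (x1 - p)).
  have r0 := dot_ge0 (x1 - p).
  have br : 0 <= beta * dot (x1 - p) (x1 - p) by rewrite mulr_ge0 // ltW.
  move=> d0; nra.
have HR : Qpen f c (rho k.+1) x1 <= Qpen f c (rho k) x1 + (rho k.+1 - rho k) / 2 * C ^+ 2.
  rewrite /Qpen.
  have e0 := enorm_ge0 (c x1); have e1 := cC x1.
  have : enorm (c x1) ^+ 2 <= C ^+ 2 by rewrite !expr2; apply: ler_pM.
  have := rhoinc k.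
  nra.
have i01 : (2 * mu0k)^-1 <= (2 * mu1)^-1.
  rewrite lef_pV2 ?posrE ?mulr_gt0 //; lra.
have HM : enorm (p1 - z1) ^+ 2 / (2 * mu0k) <= enorm (p1 - z1) ^+ 2 / (2 * mu1).
  by apply: ler_wpM2l => //; exact: sqr_ge0.
have HD : enorm (x1 - z1) ^+ 2 / (2 * mu1) <= enorm (x1 - z1) ^+ 2 / (2 * mu0k) + Delta.
  rewrite /Delta -/mu0k -/mu1 -/x1 -/z1 ger0_norm ?subr_ge0 //.
  set q := (mu0k - mu1) / (2 * mu1 ^+ 2).
  have q0 : 0 <= q by rewrite /q divr_ge0 ?subr_ge0 // mulr_ge0 // sqr_ge0.
  have iq : (2 * mu1)^-1 - (2 * mu0k)^-1 <= q.
    have -> : (2 * mu1)^-1 - (2 * mu0k)^-1 = (mu0k - mu1) * (2 * mu0k * mu1)^-1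
      by field; rewrite !gt_eqF.
    rewrite /q; apply: ler_wpM2l; first by rewrite subr_ge0.
    rewrite lef_pV2 ?posrE ?mulr_gt0 ?exprn_gt0 //; nra.
  set A2 := enorm (x1 - z1) ^+ 2.
  have A20 : 0 <= A2 by rewrite /A2 sqr_ge0.
  have : A2 * ((2 * mu1)^-1 - (2 * mu0k)^-1) <= A2 * q by apply: ler_wpM2l.
  have : q * A2 <= q * (C ^+ 2 + A2) by apply: ler_wpM2l => //; rewrite lerDr sqr_ge0.
  lra.
rewrite /Pk /Pk1 /potential -/x0 -/x1 -/z0 -/z1 -/mu0k -/mu1 M0 M1.
rewrite /dw2 /wnorm2 -/x0 -/x1 -/z0 -/z1 -/dx -/dz -/DX -/DZ.
have K1 : 0 <= DZ / (2 * mu0k) by rewrite divr_ge0 // mulr_ge0 // ltW.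
have K2 : 0 <= Lk * DZ by rewrite mulr_ge0.
have HBl : dot N dx - dot G0 dx = dot N dx - dot G0 dx by [].
set kk := (2 * mu0k)^-1 in HA HC H3 HM HD K1 *.
have kk0 : 0 <= kk by rewrite /kk invr_ge0 mulr_ge0 // ltW.
have Gr' : (enorm (x1 - z1) ^+ 2 - enorm (x1 - z0) ^+ 2 - enorm (p1 - p) ^+ 2
          + enorm (p1 - z0) ^+ 2 - enorm (p1 - z1) ^+ 2 + DZ) * kk <= 0.
  by rewrite mulr_le0_ge0.
rewrite !(mulrDl, mulNr) in Gr'.
split; first lra.
have hmL : mu0k * Lk <= 1 / 4 by exact: muL k.
have pos : 0 < 1 - 2 * mu0k * Lk by lra.
set K := ((2 * mu0k)^-1 - Lk) / 2.
have KE : 4 * mu0k / (1 - 2 * mu0k * Lk) * K = 1.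
  rewrite /K /kk; field.
  by rewrite !gt_eqF.
have c0 : 0 <= 4 * mu0k / (1 - 2 * mu0k * Lk) by apply: divr_ge0; [apply: mulr_ge0 => //; exact: ltW | exact: ltW].
have EE : DX + DZ = (4 * mu0k / (1 - 2 * mu0k * Lk) * K) * (DX + DZ) by rewrite KE mul1r.
rewrite {1}EE -mulrA.
apply: ler_wpM2l => //.
rewrite /K -/kk; lra.
Qed.
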